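(* Let $\phi\colon\mathbb{R}\to\mathbb{R}$ be an increasing homeomorphism with $\phi(0)=0$, let $f\colon\mathbb{R}\to\mathbb{R}$ be continuous, and let $h\colon[0,T]\times\mathbb{R}\to\mathbb{R}$ be a Carathéodory function satisfying: $(A_0)$ for all $t_0\in[0,T]$, $u_0\in\mathbb{R}$ and $\varepsilon>0$ there exists $\delta>0$ such that if $|t-t_0|<\delta$ and $|u-u_0|<\delta$ then $|h(t,u)-h(t,u_0)|<\varepsilon$ for a.e. $t$. Let $b>0$ and $\beta\in\mathfrak{D}$ be such that $$(\phi(\beta'(t)))'+f(\beta(t))\beta'(t)+h(t,\beta(t))\le -b\quad\text{for a.e. }t\in[0,T].$$ Then $\beta$ is a strict upper solution to $(\phi(u'))'+f(u)u'+h(t,u)=0$.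
   Context: $\mathcal{C}^1_T=\{u\in\mathcal{C}^1([0,T]):u(0)=u(T),\,u'(0)=u'(T)\}$ and $\mathfrak{D}=\{u\in\mathcal{C}^1_T:\phi(u')\text{ is absolutely continuous}\}$. A $T$-periodic solution of $(\phi(u'))'+f(u)u'+h(t,u)=0$ is a $u\in\mathfrak{D}$ satisfying the equation a.e. A function $\beta\in\mathfrak{D}$ is a strict upper solution of this equation if $(\phi(\beta'))'+f(\beta)\beta'+h(t,\beta)<0$ for a.e. $t\in[0,T]$ and, whenever $u$ is a $T$-periodic solution with $u(t)\le\beta(t)$ for all $t\in[0,T]$, then $u(t)<\beta(t)$ for all $t\in[0,T]$. A Carathéodory function is measurable in $t$, continuous in $u$, and for each $r>0$ bounded in absolute value on $[0,T]\times[-r,r]$ by an $L^1$ function of $t$. *)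

(* Defs.v *)
From HB Require Import structures.
From mathcomp Require Import all_boot all_order all_algebra.
From mathcomp Require Import all_classical all_reals all_analysis.
Set Implicit Arguments. Unset Strict Implicit. Unset Printing Implicit Defensive.
Import Order.TTheory GRing.Theory Num.Theory.
Import numFieldNormedType.Exports.
Local Open Scope classical_set_scope.
Local Open Scope ring_scope.

Section Defs.
Variable R : realType.

Definition I0T (T : R) : set R := [set t | 0 <= t <= T].

Definition incr_homeo_0 (phi : R -> R) : Prop :=
  {homo phi : x y / x < y} /\ continuous phi /\
  (exists psi : R -> R, cancel phi psi /\ cancel psi phi /\ continuous psi) /\
  phi 0 = 0.

Definition Caratheodory (T : R) (h : R -> R -> R) : Prop :=
  (forall u, measurable_fun (I0T T) (fun t => h t u)) /\
  (forall t, I0T T t -> continuous (h t)) /\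
  (forall r, 0 < r -> exists g : R -> R,
      (@lebesgue_measure R).-integrable (I0T T) (fun t => (g t)%:E) /\
      forall t u, I0T T t -> `|u| <= r -> `|h t u| <= g t).

Definition condA0 (T : R) (h : R -> R -> R) : Prop :=
  forall t0 u0 eps, I0T T t0 -> 0 < eps ->
    exists2 delta, 0 < delta &
      {ae @lebesgue_measure R, forall t, I0T T t ->
        forall u, `|t - t0| < delta -> `|u - u0| < delta ->
          `|h t u - h t u0| < eps}.

Definition abs_cont_on (T : R) (g : R -> R) : Prop :=
  forall eps, 0 < eps -> exists2 delta, 0 < delta &
    forall (n : nat) (a b : nat -> R),
      (forall i, (i < n)%N -> 0 <= a i /\ a i <= b i /\ b i <= T) ->
      (forall i, (i.+1 < n)%N -> b i <= a i.+1) ->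
      \sum_(i < n) (b i - a i) < delta ->
      \sum_(i < n) `|g (b i) - g (a i)| < eps.

(* u is in C^1_T with derivative u' : u, u' continuous on [0,T], u has
   derivative u' on ]0,T[ (hence one-sided derivatives u' at 0 and T),
   u(0) = u(T), u'(0) = u'(T). *)
Definition C1T (T : R) (u u' : R -> R) : Prop :=
  {within I0T T, continuous u} /\ {within I0T T, continuous u'} /\
  (forall t, 0 < t < T -> is_derive t 1 u (u' t)) /\
  u 0 = u T /\ u' 0 = u' T.

Definition inD (phi : R -> R) (T : R) (u u' : R -> R) : Prop :=
  C1T T u u' /\ abs_cont_on T (phi \o u').

Definition Lop (phi f : R -> R) (h : R -> R -> R) (u u' : R -> R) (t : R) : R :=
  derive1 (phi \o u') t + f (u t) * u' t + h t (u t).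

Definition periodic_solution (phi f : R -> R) (h : R -> R -> R) (T : R)
    (u u' : R -> R) : Prop :=
  inD phi T u u' /\
  {ae @lebesgue_measure R, forall t, I0T T t ->
     derivable (phi \o u') t 1 /\ Lop phi f h u u' t = 0}.

Definition strict_upper_solution (phi f : R -> R) (h : R -> R -> R) (T : R)
    (beta beta' : R -> R) : Prop :=
  inD phi T beta beta' /\
  {ae @lebesgue_measure R, forall t, I0T T t ->
     derivable (phi \o beta') t 1 /\ Lop phi f h beta beta' t < 0} /\
  (forall u u' : R -> R, periodic_solution phi f h T u u' ->
     (forall t, I0T T t -> u t <= beta t) ->
     forall t, I0T T t -> u t < beta t).

End Defs.

(* Main.v *)
Require Import Defs.
From HB Require Import structures.
From mathcomp Require Import all_boot all_order all_algebra.
From mathcomp Require Import all_classical all_reals all_analysis.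
From mathcomp Require Import ring lra measurable_realfun.
Import Order.TTheory GRing.Theory Num.Theory.
Import numFieldNormedType.Exports.
Local Open Scope classical_set_scope.
Local Open Scope ring_scope.

Lemma within_ed {R : realType} {A : set R} {g : R -> R} {x : R} :
  {within A, continuous g} -> A x -> forall e, 0 < e ->
  exists2 d, 0 < d & forall y, A y -> `|y - x| < d -> `|g y - g x| < e.
Proof.
move=> /subspace_continuousP /[apply] cv e e0.
have : \forall t \near within A (nbhs x), `|g x - g t| < e.
  by apply: (@cvgr_dist_lt _ R^o); [exact: cv|].
rewrite near_withinE => /nbhs_ballP [d d0 H].
exists d => // y Ay yx; rewrite distrC; apply: H => //.
by rewrite -ball_normE /ball_ /= distrC.
Qed.

Lemma deriv_local {R : realType} (k : R -> R) x c : derivable k x 1 -> c < derive1 k x ->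
  exists2 d, 0 < d & forall y, 0 < `|y - x| < d -> c < (k y - k x) / (y - x).
Proof.
move=> dk ck.
have cv : (fun h => h^-1 * (k (h + x) - k x)) @ (0:R)^' --> derive1 k x.
  move: dk; rewrite /derivable /derive1.
  have -> : (fun h : R => h^-1 *: (k (h *: (1:R) + x) - k x)) = (fun h => h^-1 * (k (h + x) - k x)).
    by apply/funext => h; rewrite /= [h%:A]mulr1.
  by [].
have := cvgr_gt _ cv _ ck.
move=> /(_ _)/nbhs_ballP [d d0 H].
exists d => // y /andP[y0 yd].
have := H (y - x); rewrite -ball_normE /ball_ /= sub0r normrN => /(_ yd).
by rewrite -normr_gt0 y0 subrK mulrC => /(_ isT).
Qed.

Definition Pinv {R : realType} (U : set R) (k : R -> R) (a c y : R) : Prop :=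
  exists n (p q : nat -> R),
   [/\ (forall i, (i < n)%N -> a <= p i /\ p i <= q i /\ q i <= y),
       (forall i, (i.+1 < n)%N -> q i <= p i.+1),
       ((\sum_(i < n) (q i - p i))%:E <= (@lebesgue_measure R) (U `&` `]a, y]))%E &
       c * (y - a) - c * (\sum_(i < n) (q i - p i))
         - \sum_(i < n) `|k (q i) - k (p i)| <= k y - k a].

Lemma Pinv_a (R : realType) (U : set R) k a c : Pinv U k a c a.
Proof.
exists 0%N, (fun=> 0), (fun=> 0); split => //; rewrite !big_ord0.
  exact: measure_ge0.
by rewrite !subrr; lra.
Qed.

Lemma core (R : realType) (U : set R) (k : R -> R) (a b c : R) :
  a < b -> open U ->
  (forall s, a <= s <= b -> ~ U s -> exists2 d, 0 < d & forall y, `|y - s| < d ->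
       (s <= y -> c * (y - s) <= k y - k s) /\ (y <= s -> c * (s - y) <= k s - k y)) ->
  Pinv U k a c b.
Proof.
move=> ab oU hgood.
pose S := [set y | a <= y <= b /\ Pinv U k a c y].
have Sa : S a by split; [rewrite lexx ltW | exact: Pinv_a].
have ubS : ubound S b by move=> y [/andP[_ ]].
have hsS : has_sup S by split; [exists a | exists b].
pose s := sup S.
have a_s : a <= s := sup_upper_bound hsS Sa.
have sb : s <= b := ge_sup (ex_intro _ a Sa) ubS.
suff [d d0 ext] : exists2 d, 0 < d & forall y, S y -> s - d < y ->
    Pinv U k a c (Num.min b (s + d / 2)).
  have [y Sy ys] := sup_adherent d0 hsS.
  have := ext y Sy ys; set s' := Num.min b (s + d / 2) => Ps'.
  have s'b : s' <= b by rewrite ge_min lexx.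
  have d2 : 0 < d / 2 by rewrite divr_gt0.
  have ss' : s <= s' by rewrite le_min sb /= lerDl ltW.
  have Ss' : S s' by split => //; rewrite s'b andbT (le_trans a_s).
  have s's : s' <= s := sup_upper_bound hsS Ss'.
  have bs' : b <= s'.
    move: s's; rewrite ge_min => /orP[bs|]; first exact: le_trans bs ss'.
    by rewrite gerDl leNgt d2.
  by have -> : b = s' by apply/le_anti; rewrite bs' s'b.
have mU : measurable U by exact: open_measurable.
case: (pselect (U s)) => Us; last first.
  have asb : a <= s <= b by rewrite a_s sb.
  have [d d0 loc] := hgood s asb Us.
  exists d => // y [/andP[ay yb] [n [p [q [H1 H2 H3 H4]]]]] syd.
  have ys : y <= s := sup_upper_bound hsS (conj (introT andP (conj ay yb)) (ex_intro _ n (ex_intro _ p (ex_intro _ q (And4 H1 H2 H3 H4))))).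
  set s' := Num.min b (s + d / 2).
  have d2 : 0 < d / 2 by rewrite divr_gt0.
  have ss' : s <= s' by rewrite le_min sb /= lerDl ltW.
  have s'd : s' - s < d.
    have : s' <= s + d / 2 by rewrite ge_min lexx orbT.
    lra.
  exists n, p, q; split => //.
  - move=> i /H1 [? [? ?]]; split => //; split => //; lra.
  - apply: (le_trans H3); apply: le_measure; rewrite ?inE.
    + by apply: measurableI => //; exact: measurable_itv.
    + by apply: measurableI => //; exact: measurable_itv.
    + apply: setIS => z /=; rewrite !in_itv /= => /andP[-> zy] /=; lra.
  - have l1 : c * (s' - s) <= k s' - k s.
      by apply: (loc s' _).1 => //; rewrite ger0_norm ?subr_ge0.
    have l2 : c * (s - y) <= k s - k y.
      by apply: (loc y _).2 => //; rewrite distrC ger0_norm ?subr_ge0 //; lra.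
    move: H4 l1 l2; rewrite !mulrBr; lra.
have := oU s Us; move=> /nbhs_ballP [d d0 sub].
exists d => // y [/andP[ay yb] [n [p [q [H1 H2 H3 H4]]]]] syd.
have ys : y <= s := sup_upper_bound hsS (conj (introT andP (conj ay yb)) (ex_intro _ n (ex_intro _ p (ex_intro _ q (And4 H1 H2 H3 H4))))).
set s' := Num.min b (s + d / 2).
have d2 : 0 < d / 2 by rewrite divr_gt0.
have ss' : s <= s' by rewrite le_min sb /= lerDl ltW.
have s'd : s' - s < d.
  have : s' <= s + d / 2 by rewrite ge_min lexx orbT.
  lra.
have ys' : y <= s' by apply: le_trans ss'.
have subU : `]y, s'] `<=` U.
  move=> z; rewrite /= in_itv /= => /andP[yz zs]; apply: sub.
  rewrite -ball_normE /ball_ /=; rewrite ltr_norml; apply/andP; split; lra.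
exists n.+1, (fun i => if i == n then y else p i), (fun i => if i == n then s' else q i).
rewrite !big_ord_recr /= eqxx.
have E1 : \sum_(i < n) ((if (widen_ord (leqnSn n) i : nat) == n then s' else q i) -
      (if (widen_ord (leqnSn n) i : nat) == n then y else p i)) = \sum_(i < n) (q i - p i).
  by apply: eq_bigr => i _; rewrite /= ltn_eqF.
have E2 : \sum_(i < n) `|k (if (widen_ord (leqnSn n) i : nat) == n then s' else q i) -
      k (if (widen_ord (leqnSn n) i : nat) == n then y else p i)| = \sum_(i < n) `|k (q i) - k (p i)|.
  by apply: eq_bigr => i _; rewrite /= ltn_eqF.
rewrite E1 E2; split.
- move=> i; rewrite ltnS leq_eqVlt => /orP[/eqP->|iln].
    by rewrite eqxx; split => //; split => //.
  rewrite ltn_eqF //; have [? [? ?]] := H1 i iln; split => //; split => //; lra.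
- move=> i; rewrite ltnS => iln.
  have iln' : (i < n)%N by apply: leq_ltn_trans iln.
  rewrite (ltn_eqF iln').
  case: (i.+1 =P n) => [e|/eqP ne]; first by have [_ [_ ->]] := H1 i iln'.
  by apply: H2; rewrite ltn_neqAle ne iln.
- have mA : measurable (U `&` `]a, y]) by apply: measurableI => //; exact: measurable_itv.
  have mB : measurable (`]y, s'] : set R) by exact: measurable_itv.
  have disj : (U `&` `]a, y]) `&` `]y, s'] = set0.
    apply/seteqP; split => // z /= [[_]]; rewrite !in_itv /= => /andP[_ zy] /andP[yz _]; lra.
  have muB : (@lebesgue_measure R) `]y, s'] = (s' - y)%:E.
    rewrite lebesgue_measure_itv /= lte_fin; case: ifPn => [_|]; first by rewrite EFinB.
    rewrite -leNgt => s'y; have -> : s' = y by apply/le_anti; rewrite s'y ys'.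
    by rewrite subrr.
  have sub2 : (U `&` `]a, y]) `|` `]y, s'] `<=` U `&` `]a, s'].
    move=> z /= [[Uz]|]; rewrite !in_itv /=.
      by move=> /andP[az zy]; split => //; rewrite az /=; lra.
    move=> /andP[yz zs]; split; first by apply: subU; rewrite /= in_itv /= yz zs.
    by rewrite zs andbT; lra.
  have mC : measurable (U `&` `]a, s']) by apply: measurableI => //; exact: measurable_itv.
  have Hle : (@lebesgue_measure R ((U `&` `]a, y]) `|` `]y, s']) <= @lebesgue_measure R (U `&` `]a, s']))%E.
    by apply: le_measure; rewrite ?inE //; exact: measurableU.
  apply: le_trans Hle.
  rewrite measureU // EFinD -muB; apply: leeD H3 _; exact: lexx.
- have := ler_norm (k y - k s'); rewrite distrC.
  move: H4; rewrite !mulrDr !mulrN; lra.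
Qed.

Lemma neg_set1 (R : realType) (x : R) : (@lebesgue_measure R).-negligible [set x].
Proof.
by exists [set x]; split => //; exact: lebesgue_measure_set1.
Qed.

Lemma ac_mono (R : realType) (T : R) (k : R -> R) (a b c : R) :
  0 <= a -> a < b -> b <= T -> 0 <= c -> abs_cont_on T k ->
  {ae @lebesgue_measure R, forall x, a < x < b -> derivable k x 1 /\ c < derive1 k x} ->
  c * (b - a) <= k b - k a.
Proof.
move=> a0 ab bT c0 hac hae.
suff H : forall e, 0 < e -> c * (b - a) - (c + 1) * e <= k b - k a.
  apply/ler_addgt0Pr => e e0.
  have c10 : 0 < c + 1 by lra.
  have := H (e / (c + 1)) (divr_gt0 e0 c10).
  by rewrite [(c + 1) * _]mulrC divfK ?gt_eqF //; lra.
move=> e e0.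
have [dl dl0 hdl] := hac e e0.
pose dd := Num.min dl e.
have dd0 : 0 < dd by rewrite lt_min dl0 e0.
pose E' := ~` [set x | a < x < b -> derivable k x 1 /\ c < derive1 k x] `|` [set a] `|` [set b].
have nE : (@lebesgue_measure R).-negligible E'.
  by apply: negligibleU; [apply: negligibleU => //|]; exact: neg_set1.
have dd2 : 0 < dd / 2 by rewrite divr_gt0.
have [U [oU EU muU]] := outer_measure_open_le E' dd2.
move/negligible_outer_measure : nE => nE.
rewrite nE add0e in muU.
have hgood : forall s, a <= s <= b -> ~ U s -> exists2 d, 0 < d & forall y, `|y - s| < d ->
       (s <= y -> c * (y - s) <= k y - k s) /\ (y <= s -> c * (s - y) <= k s - k y).
  move=> s /andP[a_s sb] Us.
  have sa : s != a by apply/eqP => sa; apply: Us; apply: EU; left; right.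
  have sb' : s != b by apply/eqP => sb'; apply: Us; apply: EU; right.
  have asb : a < s < b by rewrite !lt_neqAle a_s sb eq_sym sa sb'.
  have Ps : a < s < b -> derivable k s 1 /\ c < derive1 k s.
    by apply: contrapT => nP; apply: Us; apply: EU; left; left.
  have [dk ck] := Ps asb.
  have [d d0 loc] := @deriv_local _ k s c dk ck.
  exists d => // y ysd; split => [sy|ys].
    have [->|ne] := eqVneq y s; first by rewrite !subrr mulr0.
    have sy' : s < y by rewrite lt_neqAle eq_sym ne sy.
    have := loc y; rewrite ysd normr_gt0 subr_eq0 ne => /(_ isT).
    by rewrite ltr_pdivlMr ?subr_gt0 // => /ltW.
  have [->|ne] := eqVneq y s; first by rewrite !subrr mulr0.
  have ys' : y < s by rewrite lt_neqAle ne ys.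
  have := loc y; rewrite ysd normr_gt0 subr_eq0 ne => /(_ isT).
  rewrite ltr_ndivlMr ?subr_lt0 // => h; rewrite mulrBr; move: h; rewrite mulrBr; lra.
have [n [p [q [H1 H2 H3 H4]]]] := @core _ U k a b c ab oU hgood.
have mU : measurable U by exact: open_measurable.
have Hle : (@lebesgue_measure R (U `&` `]a, b]) <= @lebesgue_measure R U)%E.
  by apply: le_measure; rewrite ?inE //; apply: measurableI => //; exact: measurable_itv.
have HS : \sum_(i < n) (q i - p i) <= dd / 2.
  by rewrite -lee_fin (le_trans H3) // (le_trans Hle).
have ddl : dd <= dl by rewrite ge_min lexx.
have dde : dd <= e by rewrite ge_min lexx orbT.
have HS2 : \sum_(i < n) (q i - p i) < dl by lra.
have HK : \sum_(i < n) `|k (q i) - k (p i)| < e.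
  apply: hdl HS2.
  - move=> i /H1 [? [? ?]]; split; [lra | split => //; lra].
  - exact: H2.
have HcS : c * \sum_(i < n) (q i - p i) <= c * e.
  by apply: ler_wpM2l => //; lra.
move: H4; rewrite !mulrDl mul1r; lra.
Qed.

Lemma within_contB {R : realType} (A : set R) (u v : R -> R) :
  {within A, continuous u} -> {within A, continuous v} ->
  {within A, continuous (fun t => u t - v t)}.
Proof.
move=> /subspace_continuousP hu /subspace_continuousP hv.
by apply/subspace_continuousP => x Ax; exact: cvgB (hu x Ax) (hv x Ax).
Qed.

Lemma ac_sub {R : realType} (T : R) (g1 g2 : R -> R) :
  abs_cont_on T g1 -> abs_cont_on T g2 -> abs_cont_on T (fun t => g1 t - g2 t).
Proof.
move=> h1 h2 e e0.
have e2 : 0 < e / 2 by rewrite divr_gt0.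
have [d1 d10 H1] := h1 _ e2.
have [d2 d20 H2] := h2 _ e2.
exists (Num.min d1 d2); first by rewrite lt_min d10 d20.
move=> n a b hab hs hl.
have l1 : \sum_(i < n) (b i - a i) < d1 by apply: (lt_le_trans hl); rewrite ge_min lexx.
have l2 : \sum_(i < n) (b i - a i) < d2 by apply: (lt_le_trans hl); rewrite ge_min lexx orbT.
have := H1 n a b hab hs l1; have := H2 n a b hab hs l2.
have : \sum_(i < n) `|g1 (b i) - g2 (b i) - (g1 (a i) - g2 (a i))| <=
   \sum_(i < n) `|g1 (b i) - g1 (a i)| + \sum_(i < n) `|g2 (b i) - g2 (a i)|.
  rewrite -big_split /=; apply: ler_sum => i _.
  rewrite (_ : _ - _ - _ = (g1 (b i) - g1 (a i)) - (g2 (b i) - g2 (a i))); last by ring.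
  exact: ler_normB.
lra.
Qed.

Lemma ae_mono {R : realType} {P Q : R -> Prop} : (forall x, P x -> Q x) ->
  {ae @lebesgue_measure R, forall x, P x} -> {ae @lebesgue_measure R, forall x, Q x}.
Proof. by move=> PQ; apply: negligibleS => x /= nQ Px; exact: nQ (PQ x Px). Qed.

Lemma ae_and {R : realType} {P Q : R -> Prop} :
  {ae @lebesgue_measure R, forall x, P x} -> {ae @lebesgue_measure R, forall x, Q x} ->
  {ae @lebesgue_measure R, forall x, P x /\ Q x}.
Proof.
move=> hP hQ; apply: negligibleS (negligibleU hP hQ) => x /= nPQ.
by apply: contrapT => /not_orP [/contrapT Px /contrapT Qx]; exact: nPQ.
Qed.

Theorem lemma2p2 (R : realType) (T : R) (phi f : R -> R) (h : R -> R -> R)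
    (b : R) (beta beta' : R -> R) :
  0 < T ->
  incr_homeo_0 phi ->
  continuous f ->
  Caratheodory T h ->
  condA0 T h ->
  0 < b ->
  inD phi T beta beta' ->
  {ae @lebesgue_measure R, forall t, I0T T t ->
     derivable (phi \o beta') t 1 /\ Lop phi f h beta beta' t <= - b} ->
  strict_upper_solution phi f h T beta beta'.
Proof.
move=> T0 [phinc [phic [_ phi0]]] fc _ hA0 b0 hbeta hae.
split; first exact: hbeta.
split.
  by apply: ae_mono hae => t hh At; have [dv l] := hh At; split => //; apply: le_lt_trans l _; rewrite oppr_lt0.
move=> u u' [hu hue] ule t1 At1.
have [[bc [b'c [bd [b0T b'0T]]]] bac] := hbeta.
have [[uc [u'c [ud [u0T u'0T]]]] uac] := hu.
pose A := I0T T.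
pose w t := u t - beta t.
pose dd t := u' t - beta' t.
have wc : {within A, continuous w} := @within_contB _ A u beta uc bc.
have ddc : {within A, continuous dd} := @within_contB _ A u' beta' u'c b'c.
have wd : forall t, 0 < t < T -> is_derive t 1 w (dd t).
  by move=> t tT; have := ud t tT; have := bd t tT => h1 h2; exact: is_deriveB.
have wle : forall t, A t -> w t <= 0 by move=> t At; rewrite /w subr_le0; exact: ule.
have AP : forall t, 0 <= t <= T -> A t by [].
have right : forall t0, 0 <= t0 -> t0 < T -> w t0 = 0 -> dd t0 <= 0.
  move=> t0 t00 t0T w0; rewrite leNgt; apply/negP => dpos.
  have At0 : A t0 by apply: AP; rewrite t00 ltW.
  have [eta eta0 heta] := within_ed ddc At0 _ dpos.
  pose s := Num.min T (t0 + eta / 2).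
  have e2 : 0 < eta / 2 by rewrite divr_gt0.
  have t0s : t0 < s by rewrite lt_min t0T /= ltrDl.
  have sT : s <= T by rewrite ge_min lexx.
  have ss : s <= t0 + eta / 2 by rewrite ge_min lexx orbT.
  have sub : `[t0, s] `<=` A.
    by move=> z; rewrite /= in_itv /= => /andP[h1 h2]; apply: AP; apply/andP; split; clear -h1 h2 t00 sT; lra.
  have hd : forall z, z \in `]t0, s[ -> is_derive z 1 w (dd z).
    by move=> z; rewrite in_itv /= => /andP[h1 h2]; apply: wd; apply/andP; split; clear -h1 h2 t00 sT; lra.
  have [z zin e] := MVT t0s hd (continuous_subspaceW sub wc).
  move: zin; rewrite in_itv /= => /andP[z1 z2].
  have Az : A z by apply: AP; apply/andP; split; clear -z1 z2 t00 sT; lra.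
  have := heta z Az; rewrite ger0_norm ?subr_ge0; last by rewrite ltW.
  move=> /(_ ltac:(clear -z2 ss eta0; lra)); rewrite ltr_norml => /andP[hz1 hz2].
  have As : A s by apply: AP; apply/andP; split; clear -t00 t0s sT; lra.
  have := wle s As.
  have -> : w s = dd z * (s - t0) by rewrite -e w0 subr0.
  have : 0 < dd z * (s - t0) by apply: mulr_gt0; [clear -hz1; lra | rewrite subr_gt0].
  by move=> /lt_geF ->.
have left : forall t0, 0 < t0 -> t0 <= T -> w t0 = 0 -> 0 <= dd t0.
  move=> t0 t00 t0T w0; rewrite leNgt; apply/negP => dneg.
  have At0 : A t0 by apply: AP; rewrite ltW.
  have dpos : 0 < - dd t0 by rewrite oppr_gt0.
  have [eta eta0 heta] := within_ed ddc At0 _ dpos.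
  pose s := Num.max 0 (t0 - eta / 2).
  have e2 : 0 < eta / 2 by rewrite divr_gt0.
  have t0s : s < t0 by rewrite gt_max t00 /= gtrDl oppr_lt0.
  have sT : 0 <= s by rewrite le_max lexx.
  have ss : t0 - eta / 2 <= s by rewrite le_max lexx orbT.
  have sub : `[s, t0] `<=` A.
    by move=> z; rewrite /= in_itv /= => /andP[h1 h2]; apply: AP; apply/andP; split; clear -h1 h2 sT t0T; lra.
  have hd : forall z, z \in `]s, t0[ -> is_derive z 1 w (dd z).
    by move=> z; rewrite in_itv /= => /andP[h1 h2]; apply: wd; apply/andP; split; clear -h1 h2 sT t0T; lra.
  have [z zin e] := MVT t0s hd (continuous_subspaceW sub wc).
  move: zin; rewrite in_itv /= => /andP[z1 z2].
  have Az : A z by apply: AP; apply/andP; split; clear -z1 z2 sT t0T; lra.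
  have := heta z Az; rewrite ler0_norm ?subr_le0; last by rewrite ltW.
  move=> /(_ ltac:(clear -z1 ss eta0; lra)); rewrite ltr_norml => /andP[hz1 hz2].
  have As : A s by apply: AP; apply/andP; split; clear -sT t0s t0T; lra.
  have := wle s As.
  have -> : w s = - (dd z * (t0 - s)) by rewrite -e w0 sub0r opprK.
  have : dd z * (t0 - s) < 0 by rewrite pmulr_llt0 ?subr_gt0 //; clear -hz2; lra.
  move=> H1 H2; clear -H1 H2; lra.
rewrite lt_neqAle ule // andbT; apply/negP => /eqP e1.
have w1 : w t1 = 0 by rewrite /w e1 subrr.
have wT0 : w T = w 0 by rewrite /w u0T b0T.
have dT0 : dd T = dd 0 by rewrite /dd u'0T b'0T.
have hat0 : w 0 = 0 -> dd 0 = 0.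
  move=> w0; apply/le_anti; rewrite right //= -dT0 left // ?wT0 //.
have [t0 [t00 t0T wt0 dt0]] : exists t0, [/\ 0 <= t0, t0 < T, w t0 = 0 & dd t0 = 0].
  move: At1; rewrite /I0T /= => /andP[t10 t1T].
  case: (ltP t1 T) => t1T'.
    have [t1p|t1n] := ltP 0 t1.
      by exists t1; split => //; apply/le_anti; rewrite right // left // ltW.
    have e : t1 = 0 by apply/le_anti; rewrite t1n t10.
    have w0 : w 0 = 0 by rewrite -{1}e.
    by exists 0; split => //; exact: hat0.
  have e : t1 = T by apply/le_anti; rewrite t1T t1T'.
  have w0 : w 0 = 0 by rewrite -wT0 -{1}e.
  by exists 0; split => //; exact: hat0.
have At0 : A t0 by apply: AP; rewrite t00 ltW.
have ut0 : u t0 = beta t0 by apply/eqP; rewrite -subr_eq0; apply/eqP.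
have u't0 : u' t0 = beta' t0 by apply/eqP; rewrite -subr_eq0; apply/eqP.
have b4 : 0 < b / 4 by rewrite divr_gt0.
pose G := (phi \o u') - (phi \o beta').
have GE : forall t, G t = phi (u' t) - phi (beta' t) by [].
have Gt0 : G t0 = 0 by rewrite GE u't0 subrr.
have [del del0 hdel] := hA0 t0 (beta t0) (b / 4) At0 b4.
have [eta1 eta10 h1] := within_ed uc At0 _ del0.
have [eta2 eta20 h2] := within_ed bc At0 _ del0.
pose Fterm t := f (beta t) * beta' t - f (u t) * u' t.
have Fc : {within A, continuous Fterm}.
  apply/subspace_continuousP => x Ax.
  have hb := (subspace_continuousP _ _).1 bc x Ax.
  have hb' := (subspace_continuousP _ _).1 b'c x Ax.
  have hu1 := (subspace_continuousP _ _).1 uc x Ax.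
  have hu1' := (subspace_continuousP _ _).1 u'c x Ax.
  apply: cvgB; apply: cvgM => //; apply: continuous_cvg => //; exact: fc.
have Ft0 : Fterm t0 = 0 by rewrite /Fterm ut0 u't0 subrr.
have [eta3 eta30 h3] := within_ed Fc At0 _ b4.
pose eta := Num.min (Num.min eta1 eta2) (Num.min eta3 del).
have eta0 : 0 < eta by rewrite !lt_min eta10 eta20 eta30 del0.
have etal : [/\ eta <= eta1, eta <= eta2, eta <= eta3 & eta <= del].
  by split; rewrite !ge_min lexx ?orbT.
case: etal => e1l e2l e3l edl.
pose s := Num.min T (t0 + eta / 2).
have e2 : 0 < eta / 2 by rewrite divr_gt0.
have t0s : t0 < s by rewrite lt_min t0T /= ltrDl.
have sT : s <= T by rewrite ge_min lexx.
have ss : s <= t0 + eta / 2 by rewrite ge_min lexx orbT.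
have Gac : abs_cont_on T G := @ac_sub _ T _ _ uac bac.
have aeG : {ae @lebesgue_measure R, forall x, t0 < x < s -> derivable G x 1 /\ b / 4 < derive1 G x}.
  have := ae_and hae (ae_and hue hdel).
  apply: ae_mono => x [hb [hu1 hh]] /andP[x1 x2].
  have Ax : A x by apply: AP; apply/andP; split; clear -x1 x2 t00 sT; lra.
  have [db lb] := hb Ax.
  have [du lu] := hu1 Ax.
  have xt : `|x - t0| < eta by rewrite ger0_norm; clear -x1 x2 ss; lra.
  split; first exact: derivableB.
  rewrite derive1E deriveB // -!derive1E.
  move: lb lu; rewrite /Lop => lb lu.
  have hx := hh Ax.
  have xd : `|x - t0| < del by exact: lt_le_trans xt edl.
  have hu2 : `|h x (u x) - h x (beta t0)| < b / 4.
    by apply: hx => //; rewrite -ut0; apply: h1 => //; exact: lt_le_trans xt e1l.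
  have hb2 : `|h x (beta x) - h x (beta t0)| < b / 4.
    by apply: hx => //; apply: h2 => //; exact: lt_le_trans xt e2l.
  have hF := h3 x Ax (lt_le_trans xt e3l).
  move: hu2 hb2 hF; rewrite Ft0 subr0 /Fterm !ltr_norml.
  clear -b0 lb lu; lra.
have phile : forall x y, x <= y -> phi x <= phi y.
  by move=> x y; rewrite le_eqVlt => /orP[/eqP->|/phinc/ltW].
have ddpos : forall z, t0 < z <= s -> 0 < dd z.
  move=> z /andP[z1 z2].
  have aez : {ae @lebesgue_measure R, forall x, t0 < x < z -> derivable G x 1 /\ b / 4 < derive1 G x}.
    apply: ae_mono aeG => x hx /andP[x1 x2]; apply: hx; rewrite x1 /=; clear -x2 z2; lra.
  have hm := @ac_mono _ T G t0 z (b / 4) t00 z1 (le_trans z2 sT) (ltW b4) Gac aez.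
  have Gz : 0 < G z.
    by rewrite Gt0 subr0 in hm; apply: lt_le_trans hm; apply: mulr_gt0 => //; rewrite subr_gt0.
  rewrite GE in Gz; rewrite /dd subr_gt0 ltNge; apply/negP => /phile => hle; clear -Gz hle; lra.
have sub : `[t0, s] `<=` A.
  by move=> z; rewrite /= in_itv /= => /andP[z1 z2]; apply: AP; apply/andP; split; clear -z1 z2 t00 sT; lra.
have hd : forall z, z \in `]t0, s[ -> is_derive z 1 w (dd z).
  by move=> z; rewrite in_itv /= => /andP[z1 z2]; apply: wd; apply/andP; split; clear -z1 z2 t00 sT; lra.
have [z zin e] := MVT t0s hd (continuous_subspaceW sub wc).
move: zin; rewrite in_itv /= => /andP[z1 z2].
have dz : 0 < dd z by apply: ddpos; rewrite z1 ltW.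
have As : A s by apply: AP; apply/andP; split; clear -t00 t0s sT; lra.
have := wle s As.
have -> : w s = dd z * (s - t0) by rewrite -e wt0 subr0.
have : 0 < dd z * (s - t0) by apply: mulr_gt0 => //; rewrite subr_gt0.
by move=> /lt_geF ->.
Qed.
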